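(* Let $N$ be a finite set, $C\subseteq N$ with $|C|\ge2$, and $k\in\{1,\ldots,|C|-1\}$. Then the generalized cluster inequality $$\sum_{a\in C}\ \sum_{B\subseteq N\setminus\{a\}:\,|B\cap C|\ge k}\eta(a|B)\le |C|-k$$ defines an SE facet of the family-variable polytope $P_N$.
   Context: $\mathrm{DAG}(N)$ is the set of acyclic directed graphs over $N$; $\mathrm{pa}_G(a)$ is the parent set of $a$ in $G$; $G\sim H$ (Markov equivalence) means same adjacencies and same immoralities (induced $a\to c\leftarrow b$ with $a,b$ non-adjacent). $\Upsilon=\{(a|B): a\in N,\ \emptyset\neq B\subseteq N\setminus\{a\}\}$; $\eta_G\in\mathbb{R}^{\Upsilon}$ has $\eta_G(a|B)=1$ if $B=\mathrm{pa}_G(a)$, else $0$; $P_N=\mathrm{conv}\{\eta_G:G\in\mathrm{DAG}(N)\}$. $o$ is an SE objective if $\langle o,\eta_G\rangle=\langle o,\eta_H\rangle$ whenever $G\sim H$; a facet $F$ of $P_N$ is SE if there exist an SE objective $o$ and $u$ with $P_N\subseteq\{v:\langle o,v\rangle\le u\}$ and $F=\{v\in P_N:\langle o,v\rangle=u\}$. *)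

(* Defs.v *)
From HB Require Import structures.
From mathcomp Require Import all_boot all_order all_algebra.
Set Implicit Arguments. Unset Strict Implicit. Unset Printing Implicit Defensive.
Import Order.TTheory GRing.Theory Num.Theory.
Local Open Scope ring_scope.

Section Defs.
Variable N : finType.

(* A directed graph over N, given by its parent sets: pa a = pa_G(a). *)
Definition graph := {ffun N -> {set N}}.

Definition edge (G : graph) : rel N := fun x y => x \in G y.

Definition is_DAG (G : graph) : bool :=
  [forall x, forall y, ~~ (edge G x y && connect (edge G) y x)].

Definition adjacent (G : graph) (x y : N) : bool := edge G x y || edge G y x.

Definition immorality (G : graph) (a c b : N) : bool :=
  [&& a != b, edge G a c, edge G b c & ~~ adjacent G a b].

Definition markov_equiv (G H : graph) : Prop :=
  (forall x y, adjacent G x y = adjacent H x y) /\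
  (forall a c b, immorality G a c b = immorality H a c b).

Definition Ups := {x : N * {set N} | (x.2 != set0) && (x.1 \notin x.2)}.

Variable R : realFieldType.

Definition vec := Ups -> R.

Definition dot (o v : vec) : R := \sum_(x : Ups) o x * v x.

Definition eta (G : graph) : vec :=
  fun x => if (val x).2 == G (val x).1 then 1 else 0.

Definition P_N : vec -> Prop := fun v =>
  exists lam : graph -> R,
    (forall G, 0 <= lam G) /\
    (\sum_(G | is_DAG G) lam G = 1) /\
    (forall x, v x = \sum_(G | is_DAG G) lam G * eta G x).

Definition SE_objective (o : vec) : Prop :=
  forall G H, is_DAG G -> is_DAG H -> markov_equiv G H -> dot o (eta G) = dot o (eta H).

Definition has_aff_indep (S : vec -> Prop) (n : nat) : Prop :=
  exists p : 'I_n -> vec, (forall i, S (p i)) /\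
    (forall c : 'I_n -> R, \sum_i c i = 0 -> (forall x, \sum_i c i * p i x = 0) ->
       forall i, c i = 0).

(* the maximal number of affinely independent points of S is n,
   i.e. dim aff(S) = n - 1 *)
Definition aff_rank (S : vec -> Prop) (n : nat) : Prop :=
  has_aff_indep S n /\ ~ has_aff_indep S n.+1.

Definition valid_ineq (o : vec) (u : R) : Prop := forall v, P_N v -> dot o v <= u.

Definition face_of (o : vec) (u : R) : vec -> Prop := fun v => P_N v /\ dot o v = u.

Definition set_eq (F F' : vec -> Prop) : Prop := forall v, F v <-> F' v.

Definition is_facet (F : vec -> Prop) : Prop :=
  (exists o u, valid_ineq o u /\ set_eq F (face_of o u)) /\
  (exists n, aff_rank P_N n.+1 /\ aff_rank F n).

Definition is_SE_facet (F : vec -> Prop) : Prop :=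
  is_facet F /\
  exists o u, SE_objective o /\ valid_ineq o u /\ set_eq F (face_of o u).

Definition cluster_obj (C : {set N}) (k : nat) : vec :=
  fun x => if ((val x).1 \in C) && (k <= #|(val x).2 :&: C|)%N then 1 else 0.

End Defs.

(* Main.v *)
Require Import Defs.
From HB Require Import structures.
From mathcomp Require Import all_boot all_order all_algebra.
Import Order.TTheory GRing.Theory Num.Theory.
Set Implicit Arguments. Unset Strict Implicit. Unset Printing Implicit Defensive.
From mathcomp Require Import zify.
Section Comb.
Variable N : finType.
Implicit Types G H : graph N.

Lemma path_rank G (rk : N -> nat) :
  (forall u v, u \in G v -> rk u < rk v) ->
  forall p y, path (edge G) y p -> rk y <= rk (last y p).
Proof.
move=> Hr; elim=> //= z p IH y /andP[e pz].
exact: leq_trans (ltnW (Hr _ _ e)) (IH _ pz).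
Qed.

Lemma dag_rank G (rk : N -> nat) :
  (forall u v, u \in G v -> rk u < rk v) -> is_DAG G.
Proof.
move=> Hr; apply/forallP => x; apply/forallP => y; apply/negP.
move=> /andP[exy /connectP [p pth lst]].
have := path_rank Hr pth; rewrite -lst => h.
have := Hr _ _ exy; rewrite ltnNge h.
done.
Qed.

Lemma dag_irr G v : is_DAG G -> v \notin G v.
Proof.
move=> /forallP /(_ v) /forallP /(_ v); rewrite connect0 andbT; exact.
Qed.

Lemma dag_2cyc G x y : is_DAG G -> x \in G y -> y \in G x -> False.
Proof.
move=> /forallP /(_ x) /forallP /(_ y) /negP H e1 e2; apply: H.
by rewrite /edge e1 /= connect1.
Qed.

Lemma dag_sink G (T : {set N}) : is_DAG G -> T != set0 ->
  exists2 s, s \in T & forall y, y \in T -> s \notin G y.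
Proof.
move=> dG /set0Pn [s0 s0T].
pose f s := #|[set z | connect (edge G) s z]|.
case: (arg_minnP f s0T) => s sT smin.
exists s => // y yT; apply/negP => esy.
have := smin y yT; rewrite leqNgt => /negP; apply.
apply: proper_card; apply/properP; split.
  apply/subsetP => z; rewrite !inE => yz.
  by apply: connect_trans yz; apply: connect1.
exists s; first by rewrite inE connect0.
rewrite inE; apply/negP => ys.
move: dG => /forallP /(_ s) /forallP /(_ y) /negP; apply.
by rewrite /edge esy.
Qed.

Variable C : {set N}.
Variable k : nat.

Definition hiD G (D : {set N}) v := (v \in D) && (k <= #|G v :&: D|).

Lemma valid_count G (D : {set N}) : is_DAG G ->
  #|[set v | hiD G D v]| <= #|D| - k.
Proof.
move=> dG; move Hn: #|D| => n; elim: n D Hn => [|n IH] D Hn.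
  rewrite leqn0 cards_eq0; apply/eqP/setP => v; rewrite !inE /hiD.
  apply/negP => /andP[vD]; rewrite (cardD1 v) vD in Hn; done.
case: (leqP n.+1 k) => hk.
  rewrite (_ : [set v | hiD G D v] = set0) ?cards0 //.
  apply/setP => v; rewrite !inE /hiD; apply/negP => /andP[vD hv].
  have sub : G v :&: D \subset D by apply: subsetIr.
  have eqD : G v :&: D = D.
    apply/eqP; rewrite eqEcard sub /= Hn; exact: leq_trans hk hv.
  have : v \in G v :&: D by rewrite eqD.
  by rewrite inE (negbTE (dag_irr v dG)).
have D0 : D != set0 by rewrite -card_gt0 Hn.
case: (dag_sink dG D0) => s sD sH.
have Hn' : #|D :\ s| = n by rewrite (cardsD1 s D) sD in Hn; case: Hn.
have := IH _ Hn'.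
move=> h.
have sub : [set v | hiD G D v] \subset s |: [set v | hiD G (D :\ s) v].
  apply/subsetP => v; rewrite !inE /hiD.
  case: (eqVneq v s) => [->|vs] //= /andP[vD hv].
  rewrite in_setD1 vs vD /=.
  idtac.
  suff -> : G v :&: (D :\ s) = G v :&: D by [].
  apply/setP => z; rewrite !inE.
  case: (eqVneq z s) => [->|] //=.
  by rewrite (negbTE (sH v vD)).
apply: leq_trans (subset_leq_card sub) _.
rewrite cardsU1; apply: leq_trans (leq_add (leq_b1 _) h) _.
by rewrite add1n -subSn.
Qed.

End Comb.
Section Cim.
Variable N : finType.
Implicit Types G H : graph N.

Definition cimset G (T : {set N}) := [exists a in T, (T :\ a) \subset G a].

Lemma cim_equiv G H T : is_DAG G -> is_DAG H -> markov_equiv G H ->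
  cimset G T -> cimset H T.
Proof.
move=> dG dH [eA eI] /existsP [a /andP[aT sub]].
have T0 : T != set0 by apply/set0Pn; exists a.
case: (dag_sink dH T0) => s sT sH.
apply/existsP; exists s; rewrite sT /=.
apply/subsetP => y; rewrite in_setD1 => /andP[ys yT].
case adj: (adjacent H y s).
  move: adj; rewrite /adjacent /edge => /orP[//|sy].
  by move: (sH y yT); rewrite sy.
exfalso; move: adj; rewrite -eA /adjacent /edge.
case: (eqVneq y a) => [ya|ya].
  have : s \in G a by apply: (subsetP sub); rewrite in_setD1 sT andbT; rewrite eq_sym -ya.
  by rewrite ya => ->; rewrite orbT.
case: (eqVneq s a) => [sa|sa].
  have : y \in G a by apply: (subsetP sub); rewrite in_setD1 yT ya.
  by rewrite -sa => ->.
have yG : y \in G a by apply: (subsetP sub); rewrite in_setD1 yT ya.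
have sG : s \in G a by apply: (subsetP sub); rewrite in_setD1 sT sa.
move=> nadj.
have : immorality G s a y.
  by rewrite /immorality eq_sym ys /edge sG yG /adjacent /edge orbC nadj.
rewrite eI => /and4P [_ esa _ _].
by move: (sH a aT); rewrite /edge in esa; rewrite esa.
Qed.

End Cim.
Section Count.
Variable N : finType.
Implicit Types G H : graph N.
Variable C : {set N}.

Lemma sink_uniq G (T : {set N}) a b : is_DAG G -> a \in T -> b \in T ->
  T :\ a \subset G a -> T :\ b \subset G b -> a = b.
Proof.
move=> dG aT bT sa sb; apply/eqP; apply/negPn/negP => ab.
have h1 : b \in G a by apply: (subsetP sa); rewrite in_setD1 bT eq_sym ab.
have h2 : a \in G b by apply: (subsetP sb); rewrite in_setD1 aT ab.
exact: dag_2cyc dG h1 h2.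
Qed.

Lemma card_sum (T : finType) (P : pred T) : #|[set x | P x]| = \sum_x (P x : nat).
Proof.
rewrite -sum1_card big_mkcond /=; apply: eq_bigr => x _; rewrite inE.
by case: (P x).
Qed.

Definition Qc G (j : nat) (T : {set N}) (v : N) := [&& v \in T, T :\ v \subset G v, #|T| == j.+1 & T \subset C].

Lemma cim_count G j : is_DAG G ->
  #|[set T : {set N} | [&& T \subset C, #|T| == j.+1 & cimset G T]]| =
  \sum_(v in C) 'C(#|G v :&: C|, j).
Proof.
move=> dG.
rewrite card_sum.
transitivity (\sum_T \sum_(v in C) (Qc G j T v : nat)).
  apply: eq_bigr => T _.
  case: (boolP [&& T \subset C, #|T| == j.+1 & cimset G T]) => [/and3P[TC cT /existsP [a /andP[aT sa]]]|nP].
    have aC : a \in C by apply: (subsetP TC).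
    rewrite (bigD1 a) //=; rewrite {1}/Qc aT sa cT TC /=.
    rewrite big1 // => v /andP[vC va].
    case: (boolP (Qc G j T v)) => [/and4P[vT sv _ _]|] //.
    by move: va; rewrite (sink_uniq dG aT vT sa sv) eqxx.
  rewrite big1 // => v vC; case: (boolP (Qc G j T v)) => [/and4P[vT sv cT TC]|] //.
  move: nP; rewrite TC cT /= => /negP nP; exfalso; apply: nP; apply/existsP; exists v; by rewrite vT.
rewrite exchange_big /=; apply: eq_bigr => v vC.
rewrite -card_sum -cards_draws.
have vnG : v \notin G v by apply: dag_irr.
rewrite -[RHS](@card_in_imset _ _ (fun S => v |: S)).
  apply: eq_card => T.
rewrite [in LHS]inE /Qc.
  apply/idP/imsetP.
    move=> /and4P[vT sv cT TC]; exists (T :\ v).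
      rewrite inE; apply/andP; split.
        by rewrite subsetI sv /=; apply: subset_trans (subsetDl _ _) TC.
      by rewrite (cardsD1 v) vT in cT; rewrite -eqSS.
    by rewrite setD1K.
  move=> [S]; rewrite inE => /andP[sS cS] ->.
  have vS : v \notin S.
    apply/negP => vS; move: (subsetP sS v vS); rewrite inE => /andP[].
    by rewrite (negbTE vnG).
  apply/and4P; split.
  - by rewrite setU11.
  - rewrite setU1K //; exact: subset_trans sS (subsetIl _ _).
  - by rewrite cardsU1 vS (eqP cS).
  - rewrite subUset sub1set vC /=; exact: subset_trans sS (subsetIr _ _).
move=> S1 S2; rewrite !inE => /andP[s1 _] /andP[s2 _] e.
have n1 : v \notin S1.
  apply/negP => vS; move: (subsetP s1 v vS); rewrite inE => /andP[].
  by rewrite (negbTE vnG).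
have n2 : v \notin S2.
  apply/negP => vS; move: (subsetP s2 v vS); rewrite inE => /andP[].
  by rewrite (negbTE vnG).
by rewrite -(setU1K n1) -(setU1K n2) e.
Qed.

End Count.
Section Inv.

Lemma sum_delta M (i : nat) (x : nat) : i < M.+1 ->
  \sum_(i' < M.+1) (if (i' : nat) == i then x else 0) = x.
Proof.
move=> lt; rewrite (bigD1 (Ordinal lt)) //= eqxx big1 ?addn0 // => i' ne.
case: eqP => // e; move: ne; rewrite -val_eqE /= e eqxx //.
Qed.

Lemma inv_step (f g : nat -> nat) M i :
  (forall i, M < i -> f i = 0 /\ g i = 0) ->
  (forall j, \sum_(i < M.+1) f i * 'C(i, j) = \sum_(i < M.+1) g i * 'C(i, j)) ->
  (forall i', i < i' -> f i' = g i') -> f i = g i.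
Proof.
move=> Hz Hs Hi.
case: (ltnP M i) => hM; first by case: (Hz _ hM) => -> ->.
have dec (h : nat -> nat) : \sum_(i' < M.+1) h i' * 'C(i', i) =
   h i + \sum_(i' < M.+1) (if i < i' then h i' * 'C(i', i) else 0).
  rewrite -(@sum_delta M i (h i)) // -big_split /=; apply: eq_bigr => i' _.
  case: (ltngtP i i') => c.
  - by rewrite add0n.
  - by rewrite bin_small // muln0.
  - by rewrite c binn muln1 addn0.
have := Hs i; rewrite !dec.
rewrite (eq_bigr (fun i' : 'I_M.+1 => if i < i' then g i' * 'C(i', i) else 0)).
  by move/addIn.
by move=> i' _; case: ifP => // /Hi ->.
Qed.

Lemma inv_binom (f g : nat -> nat) M :
  (forall i, M < i -> f i = 0 /\ g i = 0) ->
  (forall j, \sum_(i < M.+1) f i * 'C(i, j) = \sum_(i < M.+1) g i * 'C(i, j)) ->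
  forall i, f i = g i.
Proof.
move=> Hz Hs.
suff H : forall d i, M - d <= i -> f i = g i.
  by move=> i; apply: (H M); rewrite subnn.
elim=> [|d IH] i hi; apply: (inv_step Hz Hs) => i' lt.
  by rewrite subn0 in hi; case: (Hz i' (leq_ltn_trans hi lt)) => -> ->.
apply: IH; lia.
Qed.

End Inv.
Section SE.
Variable N : finType.
Implicit Types G H : graph N.
Variable C : {set N}.
Variable k : nat.

Definition hcount G := #|[set v | hiD k G C v]|.

Lemma sum_by_deg G (F : nat -> nat) :
  \sum_(v in C) F #|G v :&: C| =
  \sum_(i < #|C|.+1) #|[set v | (v \in C) && (#|G v :&: C| == i)]| * F i.
Proof.
transitivity (\sum_(v in C) \sum_(i < #|C|.+1) (if (i:nat) == #|G v :&: C| then F #|G v :&: C| else 0)).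
  apply: eq_bigr => v _; rewrite sum_delta // ltnS; apply: subset_leq_card; exact: subsetIr.
rewrite (exchange_big addn); apply: eq_bigr => i _.
rewrite card_sum big_distrl /= [LHS]big_mkcond; apply: eq_bigr => v _.
case: (v \in C) => /=; last by rewrite mul0n.
rewrite eq_sym; case: eqP => [->|]; by rewrite ?mul1n ?mul0n.
Qed.

Lemma markov_sym G H : markov_equiv G H -> markov_equiv H G.
Proof. by move=> [h1 h2]; split => *; rewrite ?h1 ?h2. Qed.

Lemma count_equiv G H : is_DAG G -> is_DAG H -> markov_equiv G H ->
  hcount G = hcount H.
Proof.
move=> dG dH eGH.
pose f (K : graph N) i := #|[set v | (v \in C) && (#|K v :&: C| == i)]|.
have fz K i : #|C| < i -> f K i = 0.
  move=> lt; apply/eqP; rewrite cards_eq0; apply/eqP/setP => v; rewrite !inE.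
  apply/negP => /andP[_ /eqP e]; move: lt; rewrite -e ltnNge.
  by rewrite subset_leq_card // subsetIr.
have hs j : \sum_(i < #|C|.+1) f G i * 'C(i, j) = \sum_(i < #|C|.+1) f H i * 'C(i, j).
  rewrite -!(sum_by_deg _ (fun i => 'C(i, j))) -!cim_count //.
  apply: eq_card => T; rewrite !inE.
  case: (T \subset C) (#|T| == j.+1) => [] [] //=.
  by apply/idP/idP; apply: cim_equiv => //; apply: markov_sym.
have fg := inv_binom (fun i lt => conj (fz G i lt) (fz H i lt)) hs.
rewrite /hcount !card_sum.
have e K : \sum_v (hiD k K C v : nat) = \sum_(v in C) (k <= #|K v :&: C|).
  rewrite [RHS]big_mkcond /=.
  by apply: eq_big => // v _; rewrite /hiD; case: (v \in C).
rewrite !e !(sum_by_deg _ (fun i => nat_of_bool (k <= i))).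
by apply: eq_bigr => i _; have := fg i; rewrite /f => ->.
Qed.

End SE.
Section Tmpl.
Variable N : finType.
Implicit Types G H : graph N.
Variable C : {set N}.
Variable k : nat.
Hypothesis hk1 : 0 < k.
Hypothesis hkC : k < #|C|.

Definition tight G := is_DAG G /\ hcount C k G = #|C| - k.

Definition Tmpl (s : seq N) : graph N :=
  [ffun v => if (v \in C) && (k <= index v s) then [set u | (u \in C) && (index u s < index v s)] else set0].

Definition upd G a P : graph N := [ffun v => if v == a then P else G v].

Lemma updE G a P v : upd G a P v = if v == a then P else G v.
Proof. by rewrite ffunE. Qed.

Lemma TmplE s v : Tmpl s v = if (v \in C) && (k <= index v s) then [set u | (u \in C) && (index u s < index v s)] else set0.
Proof. by rewrite ffunE. Qed.

Section S.
Variable s : seq N.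
Hypothesis us : uniq s.
Hypothesis sC : forall v, (v \in s) = (v \in C).

Lemma size_ordC : size s = #|C|.
Proof. by rewrite -(card_uniqP us); apply: eq_card => v; rewrite sC. Qed.

Lemma card_pre i : i <= size s -> #|[set u | (u \in C) && (index u s < i)]| = i.
Proof.
move=> le.
rewrite (@eq_card _ _ (mem (take i s))); last first.
  move=> u; rewrite inE /= (in_take_leq _ le) -sC.
  case: (boolP (u \in s)) => // un; rewrite (memNindex un) ltnNge le //.
by rewrite (card_uniqP (take_uniq i us)) size_take; case: ltnP => // h; apply/eqP; rewrite eqn_leq le h.
Qed.

Lemma card_idx v : v \in C -> #|[set u | (u \in C) && (index u s < index v s)]| = index v s.
Proof. by move=> vC; apply: card_pre; apply: index_size. Qed.

Lemma card_hi_idx : #|[set v | (v \in C) && (k <= index v s)]| = #|C| - k.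
Proof.
have hk : k <= size s by rewrite size_ordC ltnW.
have := cardsID [set v | index v s < k] C.
have -> : C :&: [set v | index v s < k] = [set u | (u \in C) && (index u s < k)].
  by apply/setP => v; rewrite !inE.
rewrite card_pre // => e.
have -> : [set v | (v \in C) && (k <= index v s)] = C :\: [set v | index v s < k].
  by apply/setP => v; rewrite !inE leqNgt andbC.
by rewrite -e addKn.
Qed.

Lemma Tmpl_hi v : hiD k (Tmpl s) C v = (v \in C) && (k <= index v s).
Proof.
rewrite /hiD TmplE; case: (boolP (v \in C)) => //= vC.
case: (leqP k (index v s)) => h.
  have -> : [set u | (u \in C) && (index u s < index v s)] :&: C = [set u | (u \in C) && (index u s < index v s)].
    by apply/setIidPl/subsetP => u; rewrite inE => /andP[].
  by rewrite card_idx.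
by rewrite set0I cards0 leqNgt hk1.
Qed.

Lemma Tmpl_dag : is_DAG (Tmpl s).
Proof.
apply: (@dag_rank _ _ (fun v => index v s)) => u v; rewrite TmplE.
by case: ifP => _; rewrite ?inE // => /andP[].
Qed.

Lemma Tmpl_count : hcount C k (Tmpl s) = #|C| - k.
Proof.
rewrite /hcount -card_hi_idx; apply: eq_card => v; rewrite !inE; exact: Tmpl_hi.
Qed.

Lemma Tmpl_tight : tight (Tmpl s).
Proof. split; [exact: Tmpl_dag | exact: Tmpl_count]. Qed.


End S.

Lemma hiD_upd_ne G a P v : v != a -> hiD k (upd G a P) C v = hiD k G C v.
Proof. by move=> va; rewrite /hiD updE (negbTE va). Qed.

Lemma hcount_upd G a P : hiD k (upd G a P) C a = hiD k G C a ->
  hcount C k (upd G a P) = hcount C k G.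
Proof.
move=> e; rewrite /hcount; apply: eq_card => v; rewrite !inE.
by case: (eqVneq v a) => [->//|va]; rewrite hiD_upd_ne.
Qed.

End Tmpl.
Section Constr.
Variable N : finType.
Implicit Types G H : graph N.
Variable C : {set N}.
Variable k : nat.
Hypothesis hk1 : 0 < k.
Hypothesis hkC : k < #|C|.

Definition sD (D : {set N}) a := enum D ++ a :: enum (C :\: D :\ a).

Lemma sD_props (D : {set N}) a : a \in C -> D \subset C :\ a ->
  [/\ uniq (sD D a), forall v, (v \in sD D a) = (v \in C), index a (sD D a) = #|D|
    & forall u, u \in D -> index u (sD D a) < #|D|].
Proof.
move=> aC sub.
have aD : a \notin D.
  by apply/negP => /(subsetP sub); rewrite !inE eqxx.
split.
- rewrite /sD cat_uniq; apply/and3P; split.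
  + exact: enum_uniq.
  + apply/hasPn => u; rewrite inE !mem_enum !inE => /orP[/eqP ->|/and3P[_ uD _]] //.
  + by rewrite /= mem_enum !inE eqxx /= enum_uniq.
- move=> v; rewrite /sD mem_cat inE !mem_enum !inE.
  case: (eqVneq v a) => [->|va] /=; first by rewrite aC orbT.
  case vD: (v \in D) => //=.
  by move: (subsetP sub v vD); rewrite !inE => /andP[_ ->].
- by rewrite /sD index_cat mem_enum (negbTE aD) /= eqxx addn0 cardE.
- move=> u uD; rewrite /sD index_cat mem_enum uD cardE index_mem mem_enum //.
Qed.

Lemma upd_dag_D (D : {set N}) a (P : {set N}) : a \in C -> D \subset C :\ a -> a \notin P -> P :&: C \subset D ->
  is_DAG (upd (Tmpl C k (sD D a)) a P).
Proof.
move=> aC sub aP PC.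
case: (sD_props aC sub) => us sC ia iu.
apply: (@dag_rank _ _ (fun v => if v \in C then (index v (sD D a)).+1 else 0)) => u v.
rewrite updE; case: (eqVneq v a) => [->|va].
  move=> uP; rewrite aC ia; case: ifP => // uC.
  by rewrite ltnS; apply: iu; apply: (subsetP PC); rewrite inE uP uC.
rewrite TmplE; case: ifP; rewrite ?inE // => /andP[vC _] /andP[uC lt].
by rewrite uC vC ltnS.
Qed.

Lemma E_outside a (B : {set N}) : a \notin C -> a \notin B ->
  exists2 G1, tight C k G1 & exists2 G2, tight C k G2 &
    [/\ G1 a = set0, G2 a = B & forall v, v != a -> G1 v = G2 v].
Proof.
move=> aC aB.
have us := enum_uniq (mem C).
have sC : forall v, (v \in enum C) = (v \in C) by move=> v; rewrite mem_enum.
exists (Tmpl C k (enum C)); first exact: Tmpl_tight.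
exists (upd (Tmpl C k (enum C)) a B).
  split.
    apply: (@dag_rank _ _ (fun v => if v == a then #|C|.+1 else index v (enum C))) => u v.
    rewrite updE; case: (eqVneq v a) => [_|va].
      move=> uB; case: (eqVneq u a) => [ua|_]; first by move: aB; rewrite -ua uB.
      by rewrite ltnS -(size_ordC us sC) index_size.
    rewrite TmplE; case: ifP; rewrite ?inE // => /andP[vC _] /andP[uC lt].
    case: (eqVneq u a) => [ua|_]; first by move: aC; rewrite -ua uC.
    exact: lt.
  rewrite hcount_upd; first exact: Tmpl_count.
  by rewrite /hiD (negbTE aC).
split.
- by rewrite TmplE (negbTE aC).
- by rewrite updE eqxx.
- by move=> v va; rewrite updE (negbTE va).
Qed.

Lemma E_low a (B : {set N}) : a \in C -> a \notin B -> #|B :&: C| < k ->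
  exists2 G1, tight C k G1 & exists2 G2, tight C k G2 &
    [/\ G1 a = set0, G2 a = B & forall v, v != a -> G1 v = G2 v].
Proof.
move=> aC aB lt.
have sub : B :&: C \subset C :\ a.
  apply/subsetP => u; rewrite !inE => /andP[uB ->]; rewrite andbT.
  by apply/negP => /eqP ua; move: aB; rewrite -ua uB.
case: (sD_props aC sub) => us sC ia iu.
exists (Tmpl C k (sD (B :&: C) a)); first exact: Tmpl_tight.
exists (upd (Tmpl C k (sD (B :&: C) a)) a B).
  split; first by apply: upd_dag_D.
  rewrite hcount_upd; first exact: Tmpl_count.
  rewrite (Tmpl_hi hk1 us sC) /hiD updE eqxx aC ia /=.
  by rewrite leqNgt lt.
split.
- by rewrite TmplE aC ia leqNgt lt.
- by rewrite updE eqxx.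
- by move=> v va; rewrite updE (negbTE va).
Qed.

Lemma E_high a (B B' : {set N}) : a \in C -> a \notin B -> a \notin B' ->
  k <= #|B :&: C| -> k <= #|B' :&: C| ->
  exists2 G1, tight C k G1 & exists2 G2, tight C k G2 &
    [/\ G1 a = B, G2 a = B' & forall v, v != a -> G1 v = G2 v].
Proof.
move=> aC aB aB' hB hB'.
set D := (B :|: B') :&: C.
have sub : D \subset C :\ a.
  apply/subsetP => u; rewrite !inE => /andP[uB ->]; rewrite andbT.
  apply/negP => /eqP ua; move: uB; rewrite ua.
  by rewrite (negbTE aB) (negbTE aB').
case: (sD_props aC sub) => us sC ia iu.
have tt (P : {set N}) : a \notin P -> P :&: C \subset D -> k <= #|P :&: C| ->
    tight C k (upd (Tmpl C k (sD D a)) a P).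
  move=> aP PD hP; split; first by apply: upd_dag_D.
  rewrite hcount_upd; first exact: Tmpl_count.
  rewrite (Tmpl_hi hk1 us sC) /hiD updE eqxx aC ia /= hP.
  by apply/esym; apply: leq_trans hP _; apply: subset_leq_card.
exists (upd (Tmpl C k (sD D a)) a B).
  apply: tt => //; apply: setSI; exact: subsetUl.
exists (upd (Tmpl C k (sD D a)) a B').
  apply: tt => //; apply: setSI; exact: subsetUr.
split.
- by rewrite updE eqxx.
- by rewrite updE eqxx.
- by move=> v va; rewrite !updE (negbTE va).
Qed.

End Constr.
Section Swap.
Variable N : finType.
Implicit Types G H : graph N.
Variable C : {set N}.
Variable k : nat.
Hypothesis hk1 : 0 < k.
Hypothesis hkC : k < #|C|.

Lemma index_inj (s : seq N) u v : u \in s -> v \in s -> index u s = index v s -> u = v.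
Proof.
move=> us vs e; by rewrite -(nth_index u us) e (nth_index u vs).
Qed.

Lemma E_swap a a' : a \in C -> a' \in C -> a != a' ->
  exists2 G1, tight C k G1 & exists2 G2, tight C k G2 & exists X, exists Y,
  [/\ G1 a = X, G1 a' = set0, G2 a = set0, G2 a' = Y &
     [&& a \notin X, k <= #|X :&: C|, a' \notin Y & k <= #|Y :&: C|]]
   /\ (forall v, v != a -> v != a' -> G1 v = G2 v).
Proof.
move=> aC a'C aa'.
have a'a : (a' == a) = false by rewrite eq_sym (negbTE aa').
set r := enum (C :\ a :\ a').
have ur : uniq r := enum_uniq _.
have sr : size r = #|C| - 2.
  rewrite -cardE.
  have h1 := cardsD1 a C; have h2 := cardsD1 a' (C :\ a).
  rewrite aC in h1; rewrite in_setD1 eq_sym aa' a'C in h2.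
  lia.
have ar : a \notin r by rewrite mem_enum !inE eqxx andbF.
have a'r : a' \notin r by rewrite mem_enum !inE eqxx.
set s := take k.-1 r ++ a' :: a :: drop k.-1 r.
have pe : perm_eq s ([:: a'; a] ++ r).
  have -> : s = take k.-1 r ++ [:: a'; a] ++ drop k.-1 r by [].
  by rewrite (perm_catCA (take k.-1 r) [:: a'; a]) cat_take_drop.
have us : uniq s.
  by rewrite (perm_uniq pe) /= ur ar in_cons negb_or (negbTE a'r) eq_sym aa'.
have sC : forall v, (v \in s) = (v \in C).
  move=> v; rewrite (perm_mem pe) /= !inE mem_enum !inE.
  case: (eqVneq v a') => [->|va'] //=; case: (eqVneq v a) => [->|va] //=.
have st : size (take k.-1 r) = k.-1 by rewrite size_take_min; apply/minn_idPl; rewrite sr; clear -hk1 hkC; lia.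
have a't : a' \notin take k.-1 r by apply/negP => /mem_take; rewrite (negbTE a'r).
have at_ : a \notin take k.-1 r by apply/negP => /mem_take; rewrite (negbTE ar).
have ia' : index a' s = k.-1 by rewrite /s index_cat (negbTE a't) /= eqxx addn0.
have ia : index a s = k.
  by rewrite /s index_cat (negbTE at_) /= a'a eqxx st; clear -hk1; lia.
have ss : size s = #|C| by apply: size_ordC.
set X := [set u | (u \in C) && (index u s < k)].
set Z := [set u | (u \in C) && (index u s < k.-1)].
set Y := a |: Z.
have cX : #|X| = k by apply: card_pre => //; rewrite ss; exact: ltnW.
have cZ : #|Z| = k.-1 by apply: card_pre => //; rewrite ss; apply: leq_trans (leq_pred k) (ltnW hkC).
have aZ : a \notin Z by rewrite !inE ia; apply/negP => /andP[_]; rewrite ltnNge leq_pred.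
have XC : X :&: C = X by apply/setIidPl/subsetP => u; rewrite inE => /andP[].
have YC : Y :&: C = Y.
  apply/setIidPl/subsetP => u; rewrite !inE => /orP[/eqP -> //|/andP[] //].
have cY : #|Y| = k by rewrite cardsU1 aZ cZ add1n prednK.
have T1 := Tmpl_tight hk1 hkC us sC.
set G1 := Tmpl C k s.
have G1a : G1 a = X by rewrite /G1 TmplE aC ia leqnn.
have G1a' : G1 a' = set0 by rewrite /G1 TmplE a'C ia'; case: ifP => // h; move: h; rewrite /= leqNgt ltn_predL hk1.
set G2 := upd (upd G1 a set0) a' Y.
have G2E v : G2 v = if v == a' then Y else if v == a then set0 else G1 v.
  by rewrite /G2 !updE.
exists G1 => //.
exists G2.
  split.
    apply: (@dag_rank _ _ (fun v => if v == a then k.-1 else if v == a' then k else index v s)) => u v.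
    rewrite G2E; case: (eqVneq v a') => [ev|va'].
      rewrite ev a'a /= !inE => /orP[/eqP ->|/andP[uC lt]].
        by rewrite eqxx ltn_predL.
      case: (eqVneq u a) => [eu|ua]; first by move: lt; rewrite eu ia ltnNge leq_pred.
      case: (eqVneq u a') => [eu|ua']; first by move: lt; rewrite eu ia' ltnn.
      by rewrite /=; apply: leq_trans lt (leq_pred k).
    case: (eqVneq v a) => [_|va]; first by rewrite inE.
    rewrite /G1 TmplE; case: ifP; rewrite ?inE // => /andP[vC kv] /andP[uC lt].
    have vs : v \in s by rewrite sC.
    have nva : index v s != k.
      apply/negP => /eqP e; move: va; rewrite (@index_inj s v a) ?eqxx //; first by rewrite sC.
      by rewrite ia.
    have nva' : index v s != k.-1.
      apply/negP => /eqP e; move: va'; rewrite (@index_inj s v a') ?eqxx //; first by rewrite sC.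
      by rewrite ia'.
    have hv : k < index v s by rewrite ltn_neqAle eq_sym nva kv.
    case: (eqVneq u a) => _; first by apply: leq_ltn_trans (leq_pred k) hv.
    by case: (eqVneq u a') => _.
  have e : [set v | hiD k G2 C v] = a' |: ([set v | hiD k G1 C v] :\ a).
    apply/setP => v; rewrite !inE /hiD G2E.
    case: (eqVneq v a') => [->|va'] /=; first by rewrite a'C YC cY leqnn.
    case: (eqVneq v a) => [->|va] /=; first by rewrite set0I cards0 leqNgt hk1 andbF ?(negbTE aa') ?eqxx ?andbF.
    done.
  rewrite /hcount e cardsU1.
  have a'n : a' \notin [set v | hiD k G1 C v] :\ a.
    by rewrite !inE /hiD G1a' set0I cards0 leqNgt hk1 !andbF.
  have aIn : a \in [set v | hiD k G1 C v] by rewrite inE /hiD G1a XC cX aC leqnn.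
  case: T1 => _; rewrite /hcount => <-.
  by rewrite a'n (cardsD1 a [set v | hiD k G1 C v]) aIn.
exists X, Y; split; first split => //.
- by rewrite G2E (negbTE aa') eqxx.
- by rewrite G2E eqxx.
- rewrite XC cX leqnn YC cY leqnn !andbT.
  rewrite !inE ia ltnn andbF /= negb_or eq_sym aa' /= ia' ltnn andbF //.
- by move=> v va va'; rewrite G2E (negbTE va) (negbTE va').
Qed.

End Swap.
Section Alg.
Variable N : finType.
Variable R : realFieldType.
Implicit Types G H : graph N.
Local Open Scope ring_scope.

Definition Wext (w : vec N R) (a : N) (B : {set N}) : R :=
  oapp w 0 (insub (a, B) : option (Ups N)).

Lemma Wext_val w (x : Ups N) : Wext w (val x).1 (val x).2 = w x.
Proof. by rewrite /Wext -surjective_pairing valK. Qed.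

Lemma Wext0 w a : Wext w a set0 = 0.
Proof. by rewrite /Wext insubF //= eqxx. Qed.

Lemma WextN w a (B : {set N}) : a \in B -> Wext w a B = 0.
Proof. by move=> aB; rewrite /Wext insubF //= aB andbF. Qed.

Lemma dot_eta w G : dot w (Defs.eta R G) = \sum_v Wext w v (G v).
Proof.
rewrite /dot (partition_big (fun x : Ups N => (val x).1) xpredT) //=.
apply: eq_bigr => v _.
rewrite (eq_bigr (fun x : Ups N => if val x == (v, G v) then w x else 0)); last first.
  move=> [[a B] Px] /= /eqP <-; rewrite /Defs.eta /= xpair_eqE eqxx /=.
  by case: eqP; rewrite ?mulr1 ?mulr0.
rewrite -big_mkcondr /= /Wext.
case: insubP => [y Py ey|nP] /=.
  rewrite (eq_bigl (fun x => x == y)); first by rewrite big_pred1_eq.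
  move=> x; apply/andP/eqP => [[_ /eqP e]|->]; first by apply: val_inj; exact: (etrans e (esym ey)).
  by rewrite ey eqxx.
rewrite big_pred0 // => x; apply/negP => /andP[_ /eqP ex].
by move: nP; rewrite -ex (valP x).
Qed.

Lemma dot_eq1 w G1 G2 a : (forall v, v != a -> G1 v = G2 v) ->
  dot w (Defs.eta R G1) = dot w (Defs.eta R G2) -> Wext w a (G1 a) = Wext w a (G2 a).
Proof.
move=> e; rewrite !dot_eta (bigD1 a) // [in RHS](bigD1 a) //=.
rewrite (eq_bigr (fun v => Wext w v (G2 v))); first by move/addIr.
by move=> v va; rewrite e.
Qed.

Lemma dot_eq2 w G1 G2 a a' : a != a' -> (forall v, v != a -> v != a' -> G1 v = G2 v) ->
  dot w (Defs.eta R G1) = dot w (Defs.eta R G2) ->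
  Wext w a (G1 a) + Wext w a' (G1 a') = Wext w a (G2 a) + Wext w a' (G2 a').
Proof.
move=> aa' e; rewrite !dot_eta (bigD1 a) // [in RHS](bigD1 a) //=.
have a'a : a' != a by rewrite eq_sym.
rewrite (bigD1 a') // [in RHS](bigD1 a') //= !addrA.
rewrite (eq_bigr (fun v => Wext w v (G2 v))); first by move/addIr.
by move=> v /andP[va va']; rewrite e.
Qed.

End Alg.
Section Core.
Variable N : finType.
Variable R : realFieldType.
Local Open Scope ring_scope.
Variable C : {set N}.
Variable k : nat.
Hypothesis hk1 : (0 < k)%N.
Hypothesis hkC : (k < #|C|)%N.

Lemma core (w : vec N R) (t : R) :
  (forall G, tight C k G -> dot w (Defs.eta R G) = t) ->
  exists lam : R, forall x, w x = lam * cluster_obj R C k x.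
Proof.
move=> Ht.
have : (0 < #|C|)%N by apply: leq_ltn_trans hkC.
rewrite card_gt0 => /set0Pn [a0 a0C].
have eqG G1 G2 : tight C k G1 -> tight C k G2 -> dot w (Defs.eta R G1) = dot w (Defs.eta R G2).
  by move=> h1 h2; rewrite (Ht _ h1) (Ht _ h2).
have same a (B B' : {set N}) : a \in C -> a \notin B -> a \notin B' -> (k <= #|B :&: C|)%N -> (k <= #|B' :&: C|)%N ->
    Wext w a B = Wext w a B'.
  move=> aC aB aB' hB hB'.
  case: (E_high hk1 hkC aC aB aB' hB hB') => G1 t1 [G2 t2 [e1 e2 e]].
  by rewrite -e1 -e2; apply: dot_eq1 e _; apply: eqG.
have a0n : a0 \notin C :\ a0 by rewrite !inE eqxx.
have hC0 : (k <= #|(C :\ a0) :&: C|)%N.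
  have -> : (C :\ a0) :&: C = C :\ a0 by apply/setIidPl; apply: subsetDl.
  by have := hkC; rewrite (cardsD1 a0 C) a0C add1n ltnS.
pose lam := Wext w a0 (C :\ a0).
have Hh a (B : {set N}) : a \in C -> a \notin B -> (k <= #|B :&: C|)%N -> Wext w a B = lam.
  move=> aC aB hB.
  case: (eqVneq a a0) => [ea|aa0]; first by rewrite /lam; subst a; apply: same.
  case: (E_swap hk1 hkC aC a0C aa0) => G1 t1 [G2 t2 [X [Y [[e1 e2 e3 e4 /and4P[aX hX a0Y hY]] e]]]].
  have := dot_eq2 aa0 e (eqG _ _ t1 t2).
  rewrite e1 e2 e3 e4 !Wext0 addr0 add0r => eXY.
  by rewrite (same a B X) // eXY; apply: same.
have Hz a (B : {set N}) : ~~ ((a \in C) && (k <= #|B :&: C|)%N) -> Wext w a B = 0.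
  case: (boolP (a \in B)) => [aB _|aB]; first exact: WextN.
  case: (boolP (a \in C)) => /= [aC hB|aC _].
    rewrite -ltnNge in hB.
    case: (E_low hk1 hkC aC aB hB) => G1 t1 [G2 t2 [e1 e2 e]].
    by rewrite -e2 -(dot_eq1 e (eqG _ _ t1 t2)) e1 Wext0.
  case: (E_outside hk1 hkC aC aB) => G1 t1 [G2 t2 [e1 e2 e]].
  by rewrite -e2 -(dot_eq1 e (eqG _ _ t1 t2)) e1 Wext0.
exists lam => x; rewrite -Wext_val /cluster_obj.
case: ifP => h.
  rewrite mulr1; case/andP: h => aC hB; apply: Hh => //.
  by case/andP: (valP x).
by rewrite mulr0; apply: Hz; rewrite h.
Qed.

End Core.
Lemma splitL m n' (j : 'I_m) : split (lshift n' j) = inl j.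
Proof. exact: (unsplitK (inl j)). Qed.
Lemma splitR m n' (j : 'I_n') : split (rshift m j) = inr j.
Proof. exact: (unsplitK (inr j)). Qed.

Section Lin.
Variable N : finType.
Variable R : realFieldType.
Local Open Scope ring_scope.
Notation n := #|{: Ups N}|.
Notation vecR := (vec N R).

Lemma sum_enum (F : Ups N -> R) : \sum_x F x = \sum_(j < n) F (enum_val j).
Proof.
rewrite (reindex (@enum_val _ (pred_of_simpl predT))) //.
by exists enum_rank => x _; rewrite ?enum_valK ?enum_rankK.
Qed.

Definition lftE (v : vecR) (j : 'I_(n + 1)) : R :=
  match split j with inl j' => v (enum_val j') | inr _ => 1 end.

Definition Mp m (p : 'I_m -> vecR) : 'M[R]_(m, n + 1) := \matrix_(i, j) lftE (p i) j.

Lemma Mp_mul0 m (p : 'I_m -> vecR) (c : 'rV[R]_m) :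
  (c *m Mp p == 0) = (\sum_i c 0 i == 0) && [forall x, \sum_i c 0 i * p i x == 0].
Proof.
apply/eqP/andP.
  move=> e; split.
    have e1 := congr1 (fun M : 'M[R]_(1, n + 1) => M 0 (rshift n (ord0 : 'I_1))) e.
    rewrite /= !mxE in e1; apply/eqP; rewrite -[RHS]e1; apply: eq_bigr => i _.
    by rewrite mxE /lftE splitR mulr1.
  apply/forallP => x.
  have e1 := congr1 (fun M : 'M[R]_(1, n + 1) => M 0 (lshift 1 (enum_rank x))) e.
  rewrite /= !mxE in e1; apply/eqP; rewrite -[RHS]e1; apply: eq_bigr => i _.
  by rewrite mxE /lftE splitL enum_rankK.
move=> [/eqP s0 /forallP sx]; apply/rowP => j; rewrite !mxE.
rewrite (eq_bigr (fun i => c 0 i * lftE (p i) j)); last by move=> i _; rewrite mxE.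
rewrite /lftE; case: splitP => j' _.
  exact/eqP/sx.
by rewrite -[RHS]s0; apply: eq_bigr => i _; rewrite mulr1.
Qed.

Lemma free_indep m (p : 'I_m -> vecR) : row_free (Mp p) ->
  forall c : 'I_m -> R, \sum_i c i = 0 -> (forall x, \sum_i c i * p i x = 0) -> forall i, c i = 0.
Proof.
move=> fr c s0 sx i.
have : (\row_i c i) *m Mp p == 0.
  rewrite Mp_mul0; apply/andP; split.
    by apply/eqP; rewrite -[RHS]s0; apply: eq_bigr => j _; rewrite mxE.
  apply/forallP => x; apply/eqP; rewrite -[RHS](sx x); apply: eq_bigr => j _; rewrite mxE.
  done.
move/eqP; rewrite -(mul0mx _ (Mp p)) => /(row_free_inj fr) /rowP /(_ i).
by rewrite !mxE.
Qed.

Lemma notfree_nindep (S : vecR -> Prop) m :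
  (forall p : 'I_m -> vecR, (forall i, S (p i)) -> ~~ row_free (Mp p)) ->
  ~ has_aff_indep S m.
Proof.
move=> H [p [Sp ind]].
have nf := H p Sp.
set M := Mp p in nf.
have : kermx M != 0.
  rewrite -mxrank_eq0 mxrank_ker subn_eq0 -ltnNge.
  move: nf; rewrite /row_free ltn_neqAle rank_leq_row andbT //.
case/matrix0Pn => i [j nz].
set c := row i (kermx M).
have e : c *m M == 0 by rewrite -row_mul mulmx_ker row0.
move: e; rewrite Mp_mul0 => /andP[/eqP s0 /forallP sx].
have := ind (fun i' => c 0 i') s0 (fun x => eqP (sx x)) j.
by rewrite /c mxE => e; move: nz; rewrite e eqxx.
Qed.

Lemma rank_hyper m (A : 'M[R]_(m, n + 1)) (y : 'cV[R]_(n + 1)) :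
  y != 0 -> A *m y = 0 -> (\rank A <= n)%N.
Proof.
move=> y0 Ay.
have sub : (y^T <= kermx A^T)%MS by apply/sub_kermxP; rewrite -trmx_mul Ay trmx0.
have := mxrankS sub; rewrite mxrank_ker !mxrank_tr => h2.
have h1 : (0 < \rank y)%N by rewrite lt0n mxrank_eq0.
have := leq_trans h1 h2; rewrite subn_gt0 => h3.
by rewrite -ltnS; apply: (leq_trans h3); rewrite addn1.
Qed.

Definition ycol (o : vecR) (u : R) : 'cV[R]_(n + 1) :=
  \col_j (match split j with inl j' => o (enum_val j') | inr _ => - u end).

Lemma Mp_ycol m (p : 'I_m -> vecR) o u i :
  (Mp p *m ycol o u) i 0 = dot o (p i) - u.
Proof.
rewrite mxE big_split_ord /= big_ord1.
rewrite /dot sum_enum; congr (_ + _).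
  by apply: eq_bigr => j _; rewrite !mxE /lftE splitL mulrC.
by rewrite !mxE /lftE splitR mul1r.
Qed.

Lemma ycol_neq0 (o : vecR) u x : o x != 0 -> ycol o u != 0.
Proof.
move=> ox; apply/negP => /eqP yz; move: ox.
have := congr1 (fun M : 'cV[R]_(n + 1) => M (lshift 1 (enum_rank x)) 0) yz.
by rewrite /= !mxE splitL enum_rankK => ->; rewrite eqxx.
Qed.

End Lin.
Section Main.
Variable N : finType.
Variable R : realFieldType.
Local Open Scope ring_scope.
Variable C : {set N}.
Variable k : nat.
Hypothesis hk1 : (0 < k)%N.
Hypothesis hkC : (k < #|C|)%N.
Notation o := (cluster_obj R C k).
Notation u := ((#|C| - k)%:R : R).
Notation etaR := (Defs.eta R).
Implicit Types G H : graph N.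

Lemma Wext_o a (B : {set N}) :
  Wext o a B = ([&& B != set0, a \notin B, a \in C & (k <= #|B :&: C|)%N] : nat)%:R.
Proof.
rewrite /Wext; case: insubP => [y Py ey|nP] /=.
  rewrite /cluster_obj ey /=; move: Py => /= /andP[-> ->] /=.
  by case: ifP.
move: nP => /= /negbTE; case: (B != set0) => /=; case: (a \notin B) => //= _.
Qed.

Lemma dot_o_dag G : is_DAG G -> dot o (etaR G) = (hcount C k G)%:R.
Proof.
move=> dG; rewrite dot_eta /hcount card_sum natr_sum; apply: eq_bigr => v _.
rewrite Wext_o /hiD (dag_irr v dG) /=.
case: (boolP (v \in C)) => vC; rewrite ?andbF //=.
case: (leqP k #|G v :&: C|) => h; rewrite ?andbF ?andbT //.
suff -> : G v != set0 by [].
apply/negP => /eqP e; move: h; rewrite e set0I cards0 leqn0 => /eqP k0.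
by move: hk1; rewrite k0.
Qed.

Lemma dag_le G : is_DAG G -> dot o (etaR G) <= u.
Proof. by move=> dG; rewrite dot_o_dag // ler_nat; apply: valid_count. Qed.

Lemma validO : valid_ineq o u.
Proof.
move=> v [lam [l0 [s1 hv]]].
rewrite /dot (eq_bigr (fun x => \sum_(G | is_DAG G) o x * (lam G * etaR G x))); last first.
  by move=> x _; rewrite hv big_distrr.
rewrite exchange_big /=.
rewrite (eq_bigr (fun G => lam G * dot o (etaR G))); last first.
  by move=> G _; rewrite /dot big_distrr; apply: eq_bigr => x _; rewrite mulrCA.
apply: le_trans (_ : \sum_(G | is_DAG G) lam G * u <= u).
  by apply: ler_sum => G dG; apply: ler_wpM2l => //; apply: dag_le.
rewrite -big_distrl /= s1.
by rewrite GRing.mul1r.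
Qed.

Lemma eta_PN G : is_DAG G -> P_N (etaR G).
Proof.
move=> dG; exists (fun H => if H == G then 1 else 0); split.
  by move=> H; case: ifP.
split.
  rewrite (bigD1 G) //= eqxx big1 ?addr0 // => H /andP[_ /negbTE ->] //.
move=> x; rewrite (bigD1 G) //= eqxx mul1r big1 ?addr0 // => H /andP[_ /negbTE ->].
by rewrite mul0r.
Qed.

Lemma tight_face G : tight C k G -> face_of o u (etaR G).
Proof. by case=> dG hc; split; [exact: eta_PN | rewrite dot_o_dag // hc]. Qed.

Lemma SE_o : SE_objective o.
Proof.
move=> G H dG dH e; rewrite !dot_o_dag //; congr (_%:R); exact: count_equiv.
Qed.

End Main.
Section Rank.
Variable N : finType.
Variable R : realFieldType.
Local Open Scope ring_scope.
Notation n := #|{: Ups N}|.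
Notation vecR := (vec N R).
Notation etaR := (Defs.eta R).
Implicit Types G H : graph N.

Lemma Mp_mulE m (p : 'I_m -> vecR) (Y : 'cV[R]_(n + 1)) i :
  (Mp p *m Y) i 0 = dot (fun x => Y (lshift 1 (enum_rank x)) 0) (p i) + Y (rshift n ord0) 0.
Proof.
rewrite mxE big_split_ord /= big_ord1.
rewrite /dot sum_enum; congr (_ + _).
  by apply: eq_bigr => j _; rewrite !mxE /lftE splitL enum_valK mulrC.
by rewrite !mxE /lftE splitR mul1r.
Qed.

Definition single (x : Ups N) : graph N := [ffun v => if v == (val x).1 then (val x).2 else set0].
Definition emptyG : graph N := [ffun _ => set0].

Lemma single_dag x : is_DAG (single x).
Proof.
apply: (@dag_rank _ _ (fun v => nat_of_bool (v == (val x).1))) => u v.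
rewrite ffunE; case: (eqVneq v (val x).1) => [ev|nv] /=; last by rewrite inE.
case/andP: (valP x) => _ nB uB.
case: (eqVneq u (val x).1) => [eu|] //; by move: nB; rewrite -eu uB.
Qed.

Lemma empty_dag : is_DAG emptyG.
Proof. by apply: (@dag_rank _ _ (fun _ => 0%N)) => u v; rewrite ffunE inE. Qed.

Lemma eta_single x y : etaR (single x) y = if y == x then 1 else 0.
Proof.
case: x => [[a B] Px]; case: y => [[b D] Py].
rewrite /Defs.eta ffunE.
rewrite (_ : (exist _ (b, D) Py == exist _ (a, B) Px) = (b == a) && (D == B)) //.
change ((if D == (if b == a then B else set0) then 1 else 0) = (if (b == a) && (D == B) then 1 else (0 : R))).
case: (b == a) => //=.
by case/andP: Py => /= /negbTE ->.
Qed.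

Lemma eta_empty y : etaR emptyG y = 0.
Proof.
case: y => [[b D] Py]; rewrite /Defs.eta ffunE.
change ((if D == set0 then 1 else 0) = (0 : R)).
by case/andP: Py => /= /negbTE ->.
Qed.
Lemma PN_indep : has_aff_indep (@P_N N R) n.+1.
Proof.
rewrite -addn1.
pose p (i : 'I_(n + 1)) := match split i with inl j => etaR (single (enum_val j)) | inr _ => etaR emptyG end.
exists p; split.
  move=> i; rewrite /p; case: (split i) => j; apply: eta_PN; [exact: single_dag | exact: empty_dag].
move=> c s0 sx.
have cl j : c (lshift 1 j) = 0.
  have := sx (enum_val j); rewrite big_split_ord /= big_ord1 /p splitR eta_empty mulr0 addr0.
  rewrite (bigD1 j) //= splitL eta_single eqxx mulr1 big1 ?addr0 // => j' ne.
  rewrite splitL eta_single.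
  case: eqP => [/enum_val_inj e|]; last by rewrite mulr0.
  by move: ne; rewrite e eqxx.
have cr : c (rshift n ord0) = 0.
  move: s0; rewrite big_split_ord /= big_ord1 big1 ?add0r // => j _; exact: cl.
move=> i; rewrite -(splitK i); case: (split i) => j /=; first exact: cl.
by rewrite ord1.
Qed.

Lemma PN_nindep : ~ has_aff_indep (@P_N N R) n.+2.
Proof.
apply: notfree_nindep => p _.
apply/negP; rewrite /row_free => /eqP e.
by have := rank_leq_col (Mp p); rewrite e addn1 ltnn.
Qed.

Lemma hyper_nindep (S : vecR -> Prop) (o : vecR) u x :
  o x != 0 -> (forall v, S v -> dot o v = u) -> ~ has_aff_indep S n.+1.
Proof.
move=> ox H; rewrite -addn1; apply: notfree_nindep => p Sp.
apply/negP; rewrite /row_free => /eqP e.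
have My : Mp p *m ycol o u = 0.
  apply/matrixP => i j; rewrite ord1 Mp_ycol H // subrr mxE //.
have := @rank_hyper N R _ (Mp p) (ycol o u) (ycol_neq0 u ox) My.
rewrite e => h; move: h.
by rewrite addn1 ltnn.
Qed.

End Rank.
Section Final.
Variable N : finType.
Variable R : realFieldType.
Local Open Scope ring_scope.
Variable C : {set N}.
Variable k : nat.
Hypothesis hk1 : (0 < k)%N.
Hypothesis hkC : (k < #|C|)%N.
Notation o := (cluster_obj R C k).
Notation u := ((#|C| - k)%:R : R).
Notation etaR := (Defs.eta R).
Notation n := #|{: Ups N}|.
Implicit Types G H : graph N.

Lemma o_nz : exists x, o x != 0.
Proof.
have : (0 < #|C|)%N by apply: leq_ltn_trans hkC.
rewrite card_gt0 => /set0Pn [a0 a0C].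
have hC0 : (k <= #|(C :\ a0) :&: C|)%N.
  have -> : (C :\ a0) :&: C = C :\ a0 by apply/setIidPl; apply: subsetDl.
  by have := hkC; rewrite (cardsD1 a0 C) a0C add1n ltnS.
have ne : C :\ a0 != set0.
  apply/negP => /eqP e; move: hC0; rewrite e set0I cards0 leqn0 => /eqP k0.
  by move: hk1; rewrite k0.
have := Wext_o R C k a0 (C :\ a0).
rewrite ne !inE eqxx a0C hC0 /= /Wext.
case: insubP => [y _ _|_] /= => e; first by exists y; rewrite e oner_eq0.
by move: e => /eqP; rewrite eq_sym oner_eq0.
Qed.

Lemma face_nindep : ~ has_aff_indep (face_of o u) n.+1.
Proof.
case: o_nz => x ox; apply: (hyper_nindep (u := u) ox).
by move=> v [].
Qed.

Lemma face_indep : has_aff_indep (face_of o u) n.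
Proof.
set G0 := Tmpl C k (enum C).
have t0 : tight C k G0.
  by apply: Tmpl_tight => //; [exact: enum_uniq | move=> v; rewrite mem_enum].
pose tightb G := is_DAG G && (hcount C k G == #|C| - k)%N.
have tbP G : tightb G -> tight C k G by case/andP => d /eqP h.
have tbT G : tight C k G -> tightb G by case=> d h; rewrite /tightb d h eqxx.
pose q (i : 'I_#|{: graph N}|) := if tightb (enum_val i) then etaR (enum_val i) else etaR G0.
have Fq i : face_of o u (q i).
  rewrite /q; case: ifP => h; apply: tight_face => //; exact: tbP.
set A := Mp q.
case: o_nz => x0 ox0.
have up : (\rank A <= n)%N.
  apply: (rank_hyper (ycol_neq0 u ox0)).
  apply/matrixP => i j; rewrite ord1 Mp_ycol; case: (Fq i) => _ ->.
  by rewrite subrr mxE.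
have lo : (n <= \rank A)%N.
  set K := kermx A^T.
  have sub : (K <= (ycol o u)^T)%MS.
    apply/row_subP => i; set z := row i K.
    have zA : z *m A^T = 0 by rewrite /z -row_mul mulmx_ker row0.
    have Az : A *m z^T = 0 by apply: trmx_inj; rewrite trmx_mul trmxK zA trmx0.
    pose w x := z 0 (lshift 1 (enum_rank x)).
    pose s := z 0 (rshift n ord0).
    have hw G : tight C k G -> dot w (etaR G) = - s.
      move=> tG.
      have := congr1 (fun M : 'cV[R]_#|{: graph N}| => M (enum_rank G) 0) Az.
      rewrite /= /A Mp_mulE /q enum_rankK (tbT _ tG) [X in _ = X]mxE => e.
      apply/eqP; rewrite -addr_eq0; apply/eqP.
      rewrite -[RHS]e; congr (_ + _); last by rewrite mxE.
      by apply: eq_bigr => y _; rewrite mxE.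
    have [lam hl] := core hk1 hkC hw.
    apply/sub_rVP; exists lam; apply/rowP => j.
    rewrite -(splitK j); case: (split j) => j' /=.
      rewrite ![in RHS]mxE splitL.
      by have := hl (enum_val j'); rewrite /w enum_valK.
    rewrite ord1 ![in RHS]mxE splitR.
    have e1 : dot w (etaR G0) = lam * dot o (etaR G0).
      by rewrite /dot mulr_sumr; apply: eq_bigr => y _; rewrite hl mulrA.
    have [_ hu] : face_of o u (etaR G0) by apply: tight_face.
    have := hw _ t0; rewrite e1 hu.
    by move=> e2; rewrite mulrN e2 opprK.
  have := mxrankS sub; rewrite mxrank_ker mxrank_tr => h.
  have := leq_trans h (rank_leq_row _); rewrite leq_subLR => h2.
  by move: h2; move: (\rank A) => r; rewrite leq_add2r.
have rA : \rank A = n by apply/eqP; rewrite eqn_leq up lo.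
have fr : row_free (Mp (q \o maxrankfun A)).
  rewrite (_ : Mp _ = rowsub (maxrankfun A) A); first exact: maxrowsub_free.
  by apply/matrixP => i j; rewrite !mxE.
rewrite -rA; exists (q \o maxrankfun A); split.
  by move=> i; apply: Fq.
exact: free_indep fr.
Qed.

End Final.

Unset Implicit Arguments.
Local Open Scope ring_scope.

Theorem corollary4 (N : finType) (R : realFieldType) (C : {set N}) (k : nat) :
  (2 <= #|C|)%N -> (1 <= k)%N -> (k <= #|C| - 1)%N ->
  valid_ineq (cluster_obj R C k) (#|C| - k)%:R /\
  is_SE_facet (face_of (cluster_obj R C k) (#|C| - k)%:R).
Proof.
move=> h2 hk1 hk.
have hkC : (k < #|C|)%N by clear -h2 hk; lia.
split; first exact: validO.
split.
  split.
    exists (cluster_obj R C k), (#|C| - k)%:R; split; [exact: validO | by move=> v].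
  exists #|{: Ups N}|; split; split.
  - exact: PN_indep.
  - exact: PN_nindep.
  - exact: face_indep.
  - exact: face_nindep.
exists (cluster_obj R C k), (#|C| - k)%:R; split; first exact: SE_o.
split; [exact: validO | by move=> v].
Qed.
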